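(* Let $R=(\mathbb{Z}_I,\oplus,\otimes)$ be an $I$-based ring and $S=(\mathbb{Z}_L,\oplus,\otimes)$ an $L$-based ring which is a based subring of $R$. Let $M=(\mathbb{Z}_J,\oplus,\otimes)$ be a based $R$-module with basis $J$. If $M$ is a torsion $R$-module, then the restriction $\mathrm{Res}^R_S(M)$ (i.e. $M$ viewed as an $S$-module) decomposes as a direct sum of torsion $S$-modules.
   Context: For a set $X$, $\mathbb{Z}_X$ is the free $\mathbb{Z}$-module with basis $X$. Let $(I,\mathbbm{1})$ be an involutive pointed set. A ring structure on $\mathbb{Z}_I$ is given by constants $N^i_{\alpha,i'}\ge0$ with $\alpha\otimes i'=\sum_iN^i_{\alpha,i'}i$; write $i\subset\alpha\otimes i'$ if $N^i_{\alpha,i'}\ne0$; it is $I$-based if $\overline{\alpha\otimes\alpha'}=\overline{\alpha'}\otimes\overline{\alpha}$ and $\mathbbm{1}\subset\overline{\alpha}\otimes\alpha'$ iff $\alpha=\alpha'$. A module structure on $\mathbb{Z}_J$ is given by constants $N^j_{\alpha,j'}\ge0$; it is $J$-based if $j\subset\alpha\otimes j'\iff j'\subset\overline{\alpha}\otimes j$; co-finite if $\{\alpha:j\subset\alpha\otimes j'\}$ is finite for all $j,j'$; connected if for all $j,j'$ some $\alpha$ has $j\subset\alpha\otimes j'$; torsion if co-finite and connected. $S$ is a based subring of $R$ if $L\subset I$ is closed under involution, contains $\mathbbm{1}$, and products of elements of $L$ only involve elements of $L$. *)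

(* Defs.v *)
From mathcomp Require Import all_boot.
Set Implicit Arguments. Unset Strict Implicit. Unset Printing Implicit Defensive.

(* Conventions:
   - The free Z-module Z_X has basis X; structure constants are natural numbers.
   - N a b c  = N^c_{a,b}, the coefficient of c in a (x) b   (a,b,c : I).
   - NM a j' j = N^j_{a,j'}, the coefficient of j in a (x) j' (a : I, j,j' : J).
   - "i subset x" means the corresponding structure constant is nonzero. *)

Definition finite_pred (T : eqType) (P : T -> Prop) : Prop :=
  exists s : seq T, forall x, P x -> x \in s.

Definition involutive_pointed (I : eqType) (one : I) (inv : I -> I) : Prop :=
  involutive inv /\ inv one = one.

Definition ring_constants (I : eqType) (one : I) (N : I -> I -> I -> nat) : Prop :=
  [/\ (forall a b, finite_pred (fun c => N a b c <> 0)),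
      (forall a b c d (s : seq I), uniq s ->
         (forall k, N a b k <> 0 \/ N b c k <> 0 -> k \in s) ->
         \sum_(k <- s) N a b k * N k c d = \sum_(k <- s) N b c k * N a k d),
      (forall a c, N one a c = (c == a) :> nat) &
      (forall a c, N a one c = (c == a) :> nat)].

(* I-based ring (the involution is extended Z-linearly to Z_I). *)
Definition is_based_ring (I : eqType) (one : I) (inv : I -> I)
    (N : I -> I -> I -> nat) : Prop :=
  [/\ involutive_pointed one inv,
      ring_constants one N,
      (* bar(a (x) b) = bar b (x) bar a *)
      (forall a b e, N a b (inv e) = N (inv b) (inv a) e) &
      (forall a a', N (inv a) a' one <> 0 <-> a = a')].

Definition is_based_subring (I : eqType) (one : I) (inv : I -> I)
    (N : I -> I -> I -> nat) (L : I -> Prop) : Prop :=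
  [/\ L one,
      (forall a, L a -> L (inv a)) &
      (forall a b c, L a -> L b -> N a b c <> 0 -> L c)].

Definition module_constants (I J : eqType) (one : I) (N : I -> I -> I -> nat)
    (NM : I -> J -> J -> nat) : Prop :=
  [/\ (forall a j', finite_pred (fun j => NM a j' j <> 0)),
      (forall a b j j'' (s : seq I) (t : seq J), uniq s -> uniq t ->
         (forall k, N a b k <> 0 -> k \in s) ->
         (forall m, NM b j m <> 0 -> m \in t) ->
         \sum_(k <- s) N a b k * NM k j j'' = \sum_(m <- t) NM b j m * NM a m j'') &
      (forall j j', NM one j j' = (j' == j) :> nat)].

Definition is_based_module (I J : eqType) (one : I) (inv : I -> I)
    (N : I -> I -> I -> nat) (NM : I -> J -> J -> nat) : Prop :=
  module_constants one N NM /\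
  (forall a j j', NM a j' j <> 0 <-> NM (inv a) j j' <> 0).

(* Co-finiteness / connectedness of the based module with basis B (a subset
   of J) over the based ring with basis A (a subset of I), with the
   restricted structure constants. *)
Definition is_cofinite (I J : eqType) (A : I -> Prop) (B : J -> Prop)
    (NM : I -> J -> J -> nat) : Prop :=
  forall j j', B j -> B j' -> finite_pred (fun a => A a /\ NM a j' j <> 0).

Definition is_connected (I J : eqType) (A : I -> Prop) (B : J -> Prop)
    (NM : I -> J -> J -> nat) : Prop :=
  forall j j', B j -> B j' -> exists a, A a /\ NM a j' j <> 0.

Definition is_torsion (I J : eqType) (A : I -> Prop) (B : J -> Prop)
    (NM : I -> J -> J -> nat) : Prop :=
  is_cofinite A B NM /\ is_connected A B NM.

(* Main.v *)
Require Import Defs.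
From mathcomp Require Import all_boot.
From Stdlib Require Import PropExtensionality FunctionalExtensionality.

Lemma rel_trans (I J : eqType) (one : I) (inv : I -> I)
    (N : I -> I -> I -> nat) (L : I -> Prop) (NM : I -> J -> J -> nat) :
  is_based_ring one inv N ->
  is_based_subring one inv N L ->
  is_based_module one inv N NM ->
  forall x y z a b, L a -> L b -> NM b x y <> 0 -> NM a y z <> 0 ->
  exists c, L c /\ NM c x z <> 0.
Proof.
move=> [_ [fN _ _ _] _ _] [_ _ cl] [[fM assoc _] _] x y z a b La Lb H1 H2.
have [s Hs] := fN a b.
have [t Ht] := fM b x.
have E : \sum_(k <- undup s) N a b k * NM k x z = \sum_(m <- undup t) NM b x m * NM a m z.
  apply: assoc; rewrite ?undup_uniq // => ? ?; rewrite mem_undup; [apply: Hs|apply: Ht]; done.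
have : (\sum_(m <- undup t) NM b x m * NM a m z != 0).
  rewrite sum_nat_seq_neq0; apply/hasP; exists y.
    by rewrite mem_undup; apply: Ht.
  by rewrite /= muln_eq0 negb_or; apply/andP; split; apply/eqP.
rewrite -E sum_nat_seq_neq0 => /hasP [k _] /=.
rewrite muln_eq0 negb_or => /andP [/eqP Nk /eqP Mk].
exists k; split => //; exact: cl _ _ _ La Lb Nk.
Qed.

Theorem lemma3p2 (I J : eqType) (one : I) (inv : I -> I)
    (N : I -> I -> I -> nat) (L : I -> Prop) (NM : I -> J -> J -> nat) :
  is_based_ring one inv N ->
  is_based_subring one inv N L ->
  is_based_module one inv N NM ->
  is_torsion (fun _ => True) (fun _ => True) NM ->
  exists (K : Type) (blk : J -> K),
    (forall a j j', L a -> NM a j' j <> 0 -> blk j = blk j') /\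
    (forall k : K, is_torsion L (fun j => blk j = k) NM).
Proof.
move=> HR HS HM [cof _].
set rel := fun x y => exists a, L a /\ NM a x y <> 0.
have refl : forall x, rel x x.
  move=> x; exists one; split; first by case: HS.
  by case: HM => [[_ _ ->]]; rewrite eqxx.
have sym : forall x y, rel x y -> rel y x.
  move=> x y [a [La H]]; exists (inv a); split; first by case: HS => _ Hi _; apply: Hi.
  by case: HM => _ /(_ a y x) [+ _]; apply.
have trans : forall x y z, rel x y -> rel y z -> rel x z.
  move=> x y z [b [Lb H1]] [a [La H2]].
  exact: (@rel_trans I J one inv N L NM HR HS HM _ _ _ _ _ La Lb H1 H2).
exists (J -> Prop), (fun j => fun x => rel x j).
split.
  move=> a j j' La H; apply: functional_extensionality => x.
  apply: propositional_extensionality; split => Hx.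
    by apply: trans Hx (sym _ _ _); exists a.
  by apply: trans Hx _; exists a.
move=> k; split.
  move=> j j' _ _; have [s Hs] := cof j j' Logic.I Logic.I.
  by exists s => a [_ H]; apply: Hs.
move=> j j' Hj Hj'.
have : (fun x => rel x j) = (fun x => rel x j') by rewrite Hj Hj'.
move/(f_equal (fun f => f j')) => /= E; have := refl j'; rewrite -E; exact.
Qed.
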